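(* There exists a universal constant $C>0$ such that the following holds. Let $S,T$ be commuting invertible maps of a set $X$ and $f_1,f_2,f_3:X\to\mathbb R$ with $\sup|f_i|\le 1$, $i=1,2,3$. Then for every $x\in X$ and every $N\in\mathbb N$, \[\Big(\frac{1}{N^2}\sum_{i=0}^{N-1}\sum_{j=0}^{N-1}f_1(S^ix)f_2(T^jx)f_3(S^iT^jx)\Big)^4\le C\,S_N(f_3,x),\] where $A_N=\{(i,j,k,p)\in\mathbb Z^4: i,j\in[0,N-1],\ k\in[-i,N-1-i],\ p\in[-j,N-1-j]\}$ and \[S_N(f,x)=\Big|\frac{1}{N^4}\sum_{(i,j,k,p)\in A_N} f(S^iT^jx)f(S^{i+k}T^jx)f(S^iT^{j+p}x)f(S^{i+k}T^{j+p}x)\Big|.\] *)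

(* Defs.v *)
From Stdlib Require Import Reals ZArith List.
Open Scope R_scope.

Definition zpow {X : Type} (f finv : X -> X) (z : Z) : X -> X :=
  match z with
  | Z0 => fun x => x
  | Zpos p => Nat.iter (Pos.to_nat p) f
  | Zneg p => Nat.iter (Pos.to_nat p) finv
  end.

(* The integers a, a+1, ..., b (empty if b < a). *)
Definition zrange (a b : Z) : list Z :=
  map (fun n => (a + Z.of_nat n)%Z) (seq 0 (Z.to_nat (b - a + 1))).

Definition zsum (a b : Z) (F : Z -> R) : R :=
  fold_right Rplus 0 (map F (zrange a b)).

Definition avg3 {X : Type} (S Sinv T Tinv : X -> X) (f1 f2 f3 : X -> R)
  (N : nat) (x : X) : R :=
  / (INR N ^ 2) *
  zsum 0 (Z.of_nat N - 1) (fun i =>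
  zsum 0 (Z.of_nat N - 1) (fun j =>
    f1 (zpow S Sinv i x) * f2 (zpow T Tinv j x) *
    f3 (zpow S Sinv i (zpow T Tinv j x)))).

Definition SN {X : Type} (S Sinv T Tinv : X -> X) (f : X -> R)
  (N : nat) (x : X) : R :=
  let M := (Z.of_nat N - 1)%Z in
  let P a b := zpow S Sinv a (zpow T Tinv b x) in
  Rabs (/ (INR N ^ 4) *
    zsum 0 M (fun i =>
    zsum 0 M (fun j =>
    zsum (- i) (M - i) (fun k =>
    zsum (- j) (M - j) (fun p =>
      f (P i j) * f (P (i + k)%Z j) * f (P i (j + p)%Z)
        * f (P (i + k)%Z (j + p)%Z)))))).

(* Main.v *)
Require Import Defs.
From Stdlib Require Import Reals ZArith List Lra Lia Psatz.
Open Scope R_scope.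

Definition lsum {I : Type} (L : list I) (F : I -> R) : R :=
  fold_right Rplus 0 (map F L).

Lemma lsum_nil {I} (F : I -> R) : lsum nil F = 0.
Proof. reflexivity. Qed.

Lemma lsum_cons {I} (a : I) L (F : I -> R) : lsum (a :: L) F = F a + lsum L F.
Proof. reflexivity. Qed.

Lemma lsum_ext {I} L (F G : I -> R) : (forall i, F i = G i) -> lsum L F = lsum L G.
Proof. intro H; induction L; simpl; auto. unfold lsum in *; simpl. rewrite H, IHL; auto. Qed.

Lemma lsum_plus {I} L (F G : I -> R) :
  lsum L (fun i => F i + G i) = lsum L F + lsum L G.
Proof. induction L; rewrite ?lsum_nil, ?lsum_cons; [ring|]. rewrite IHL; ring. Qed.

Lemma lsum_minus {I} L (F G : I -> R) :
  lsum L (fun i => F i - G i) = lsum L F - lsum L G.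
Proof. induction L; rewrite ?lsum_nil, ?lsum_cons; [ring|]. rewrite IHL; ring. Qed.

Lemma lsum_scal {I} L (c : R) (F : I -> R) :
  lsum L (fun i => c * F i) = c * lsum L F.
Proof. induction L; rewrite ?lsum_nil, ?lsum_cons; [ring|]. rewrite IHL; ring. Qed.

Lemma lsum_le {I} L (F G : I -> R) : (forall i, F i <= G i) -> lsum L F <= lsum L G.
Proof. intro H; induction L; rewrite ?lsum_nil, ?lsum_cons; [lra|]. specialize (H a); lra. Qed.

Lemma lsum_nonneg {I} L (F : I -> R) : (forall i, 0 <= F i) -> 0 <= lsum L F.
Proof. intro H; induction L; rewrite ?lsum_nil, ?lsum_cons; [lra|]. specialize (H a); lra. Qed.

Lemma lsum_const {I} (L : list I) c : lsum L (fun _ => c) = c * INR (length L).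
Proof. induction L; rewrite ?lsum_nil, ?lsum_cons; simpl length; [simpl; ring|].
  rewrite IHL, S_INR; ring. Qed.

Lemma lsum_swap {I J} (L : list I) (K : list J) (F : I -> J -> R) :
  lsum L (fun i => lsum K (fun j => F i j)) = lsum K (fun j => lsum L (fun i => F i j)).
Proof. induction L.
  - rewrite lsum_nil. transitivity (lsum K (fun _ => 0)).
    + rewrite lsum_const; ring.
    + apply lsum_ext; intro; reflexivity.
  - rewrite lsum_cons, IHL, <- lsum_plus. apply lsum_ext; intro; rewrite lsum_cons; ring.
Qed.

Lemma lsum_mul {I J} (L : list I) (K : list J) F G :
  lsum L F * lsum K G = lsum L (fun i => lsum K (fun j => F i * G j)).
Proof.
  rewrite Rmult_comm, <- lsum_scal. apply lsum_ext; intro i.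
  rewrite Rmult_comm, <- lsum_scal. apply lsum_ext; intro; ring.
Qed.

Lemma lsum_app {I} (L K : list I) F : lsum (L ++ K) F = lsum L F + lsum K F.
Proof. induction L; simpl app; rewrite ?lsum_nil, ?lsum_cons; [ring|]. rewrite IHL; ring. Qed.

Lemma lsum_map {I J} (L : list I) (g : I -> J) F : lsum (map g L) F = lsum L (fun i => F (g i)).
Proof. unfold lsum; rewrite map_map; reflexivity. Qed.

Lemma lsum_pairs {I J} (L : list I) (K : list J) (F : I -> J -> R) :
  lsum L (fun i => lsum K (fun j => F i j)) = lsum (list_prod L K) (fun p => F (fst p) (snd p)).
Proof. induction L; simpl list_prod; [reflexivity|].
  rewrite lsum_cons, lsum_app, lsum_map, IHL; reflexivity. Qed.

Lemma CS {I} (L : list I) (F G : I -> R) :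
  (lsum L (fun i => F i * G i)) ^ 2 <=
  lsum L (fun i => F i ^ 2) * lsum L (fun i => G i ^ 2).
Proof.
  assert (W : 0 <= lsum L (fun i => lsum L (fun j => (F i * G j - F j * G i) ^ 2))).
  { apply lsum_nonneg; intro; apply lsum_nonneg; intro. apply pow2_ge_0. }
  assert (E : lsum L (fun i => lsum L (fun j => (F i * G j - F j * G i) ^ 2)) =
     lsum L (fun i => lsum L (fun j => F i ^ 2 * G j ^ 2))
   + lsum L (fun i => lsum L (fun j => G i ^ 2 * F j ^ 2))
   - 2 * lsum L (fun i => lsum L (fun j => (F i * G i) * (F j * G j)))).
  { rewrite <- lsum_scal, <- lsum_plus, <- lsum_minus. apply lsum_ext; intro i.
    rewrite <- lsum_scal, <- lsum_plus, <- lsum_minus. apply lsum_ext; intro j. ring. }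
  rewrite <- !lsum_mul in E. nra.
Qed.

Lemma sq_le1 (a : R) : Rabs a <= 1 -> a ^ 2 <= 1.
Proof. intro H. rewrite <- pow2_abs. pose proof (Rabs_pos a). nra. Qed.

Lemma main_ineq (L : list Z) (a b : Z -> R) (c : Z -> Z -> R) :
  (forall i, Rabs (a i) <= 1) -> (forall i, Rabs (b i) <= 1) ->
  let n := INR (length L) in
  (lsum L (fun i => lsum L (fun j => a i * b j * c i j))) ^ 4 <=
  n ^ 4 * lsum L (fun i => lsum L (fun j => lsum L (fun k => lsum L (fun p =>
      c i j * c k j * c i p * c k p)))).
Proof.
  intros Ha Hb n.
  set (A := lsum L (fun i => lsum L (fun j => a i * b j * c i j))).
  set (Q := lsum L (fun i => lsum L (fun j => lsum L (fun k => lsum L (fun p =>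
      c i j * c k j * c i p * c k p))))).
  set (B := fun i => lsum L (fun j => b j * c i j)).
  assert (HA : A = lsum L (fun i => a i * B i)).
  { unfold A, B. apply lsum_ext; intro i. rewrite <- lsum_scal. apply lsum_ext; intro; ring. }
  assert (Hn : 0 <= n) by apply pos_INR.
  assert (Ha2 : lsum L (fun i => a i ^ 2) <= n).
  { replace n with (lsum L (fun _ => 1)) by (rewrite lsum_const; unfold n; ring).
    apply lsum_le; intro; apply sq_le1, Ha. }
  assert (HB0 : 0 <= lsum L (fun i => B i ^ 2)) by (apply lsum_nonneg; intro; apply pow2_ge_0).
  pose proof (CS L a B) as CS1. rewrite <- HA in CS1.
  set (D := fun j j' => lsum L (fun i => c i j * c i j')).
  set (E := lsum L (fun j => lsum L (fun j' => (b j * b j') * D j j'))).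
  assert (HE : lsum L (fun i => B i ^ 2) = E).
  { transitivity (lsum L (fun i => lsum L (fun j => lsum L (fun j' =>
        (b j * c i j) * (b j' * c i j'))))).
    { apply lsum_ext; intro i. unfold B. rewrite <- Rsqr_pow2. unfold Rsqr.
      apply lsum_mul. }
    rewrite lsum_swap. unfold E. apply lsum_ext; intro j.
    rewrite lsum_swap. apply lsum_ext; intro j'. unfold D.
    rewrite <- lsum_scal. apply lsum_ext; intro; ring. }
  rewrite HE in CS1, HB0.
  assert (S1 : A ^ 2 <= n * E) by nra.
  set (u := fun p : Z * Z => b (fst p) * b (snd p)).
  set (v := fun p : Z * Z => D (fst p) (snd p)).
  assert (HE2 : E = lsum (list_prod L L) (fun p => u p * v p)).
  { unfold E. apply (lsum_pairs L L (fun j j' => b j * b j' * D j j')). }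
  pose proof (CS (list_prod L L) u v) as CS2. rewrite <- HE2 in CS2.
  assert (Hu : lsum (list_prod L L) (fun p => u p ^ 2) <= n * n).
  { unfold u; rewrite <- (lsum_pairs L L (fun j jj => (b j * b jj) ^ 2)).
    replace (n * n) with (lsum L (fun _ => lsum L (fun _ => 1))).
    2:{ rewrite lsum_const, lsum_const; unfold n; ring. }
    apply lsum_le; intro; apply lsum_le; intro.
    rewrite Rpow_mult_distr. pose proof (sq_le1 _ (Hb i)). pose proof (sq_le1 _ (Hb i0)).
    pose proof (pow2_ge_0 (b i)). pose proof (pow2_ge_0 (b i0)). nra. }
  assert (Hv : lsum (list_prod L L) (fun p => v p ^ 2) = Q).
  { unfold v; rewrite <- (lsum_pairs L L (fun j jj => D j jj ^ 2)).
    transitivity (lsum L (fun j => lsum L (fun j' => lsum L (fun i => lsum L (fun k =>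
       (c i j * c i j') * (c k j * c k j')))))).
    { apply lsum_ext; intro j; apply lsum_ext; intro j'. unfold D.
      rewrite <- Rsqr_pow2. unfold Rsqr. apply lsum_mul. }
    transitivity (lsum L (fun j => lsum L (fun i => lsum L (fun j' => lsum L (fun k =>
       (c i j * c i j') * (c k j * c k j')))))).
    { apply lsum_ext; intro j. apply lsum_swap. }
    rewrite lsum_swap. unfold Q. apply lsum_ext; intro i; apply lsum_ext; intro j.
    rewrite lsum_swap. apply lsum_ext; intro k; apply lsum_ext; intro p. ring. }
  rewrite Hv in CS2.
  assert (HQ : 0 <= Q) by (rewrite <- Hv; apply lsum_nonneg; intro; apply pow2_ge_0).
  assert (S2 : E ^ 2 <= n * n * Q) by nra.
  assert (HA2 : 0 <= A ^ 2) by apply pow2_ge_0.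
  replace (A ^ 4) with ((A ^ 2) ^ 2) by ring.
  assert ((A ^ 2) ^ 2 <= (n * E) ^ 2) by (apply pow_incr; lra).
  nra.
Qed.
Lemma zsum_lsum a b F : zsum a b F = lsum (zrange a b) F.
Proof. reflexivity. Qed.

Lemma zsum_shift (i M : Z) (G : Z -> R) :
  zsum (- i) (M - i) (fun k => G (i + k)%Z) = zsum 0 M G.
Proof.
  unfold zsum, zrange. replace (M - i - - i + 1)%Z with (M - 0 + 1)%Z by ring.
  rewrite !map_map. f_equal. apply map_ext. intro m. f_equal. ring.
Qed.

Lemma reindex2 (i j M : Z) (H : Z -> Z -> R) :
  zsum (- i) (M - i) (fun k => zsum (- j) (M - j) (fun p => H (i + k)%Z (j + p)%Z)) =
  zsum 0 M (fun k => zsum 0 M (fun p => H k p)).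
Proof.
  transitivity (zsum 0 M (fun k => zsum (- j) (M - j) (fun p => H k (j + p)%Z))).
  { apply (zsum_shift i M (fun k => zsum (- j) (M - j) (fun p => H k (j + p)%Z))). }
  rewrite !zsum_lsum. apply lsum_ext; intro k.
  apply (zsum_shift j M (fun p => H k p)).
Qed.

Lemma len_zrange (N : nat) : length (zrange 0 (Z.of_nat N - 1)) = N.
Proof.
  unfold zrange. rewrite length_map, length_seq.
  replace (Z.of_nat N - 1 - 0 + 1)%Z with (Z.of_nat N) by ring. apply Nat2Z.id.
Qed.

Theorem lemma5p4 :
  exists C : R, C > 0 /\
  forall (X : Type) (S Sinv T Tinv : X -> X),
    (forall x, S (Sinv x) = x) -> (forall x, Sinv (S x) = x) ->
    (forall x, T (Tinv x) = x) -> (forall x, Tinv (T x) = x) ->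
    (forall x, S (T x) = T (S x)) ->
    forall f1 f2 f3 : X -> R,
    (forall x, Rabs (f1 x) <= 1) ->
    (forall x, Rabs (f2 x) <= 1) ->
    (forall x, Rabs (f3 x) <= 1) ->
    forall (x : X) (N : nat),
      (avg3 S Sinv T Tinv f1 f2 f3 N x) ^ 4 <= C * SN S Sinv T Tinv f3 N x.
Proof.
  exists 1. split; [lra|].
  intros X S Sinv T Tinv _ _ _ _ _ f1 f2 f3 H1 H2 H3 x N.
  set (L := zrange 0 (Z.of_nat N - 1)).
  set (c := fun a b => f3 (zpow S Sinv a (zpow T Tinv b x))).
  pose proof (main_ineq L (fun i => f1 (zpow S Sinv i x)) (fun j => f2 (zpow T Tinv j x))
     c (fun i => H1 _) (fun i => H2 _)) as M. cbv zeta in M.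
  unfold L in M; rewrite len_zrange in M.
  revert M.
  set (A := lsum _ _).
  set (Q := lsum _ (fun i => lsum _ (fun j => lsum _ _))). intro M.
  assert (Havg : avg3 S Sinv T Tinv f1 f2 f3 N x = / INR N ^ 2 * A) by reflexivity.
  assert (HSN : SN S Sinv T Tinv f3 N x = Rabs (/ INR N ^ 4 * Q)).
  { unfold SN. f_equal. f_equal. unfold Q, L. unfold zsum at 1. fold (lsum (zrange 0 (Z.of_nat N - 1))). apply lsum_ext; intro i.
    unfold zsum at 1. fold (lsum (zrange 0 (Z.of_nat N - 1))).
    apply lsum_ext; intro j.
    apply (reindex2 i j _ (fun k p => c i j * c k j * c i p * c k p)). }
  rewrite Havg, HSN.
  destruct (Nat.eq_dec N 0) as [->|HN].
  { simpl INR. replace (0 ^ 2) with 0 by ring. rewrite Rinv_0.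
    replace ((0 * A) ^ 4) with 0 by ring. pose proof (Rabs_pos (/ 0 ^ 4 * Q)). lra. }
  assert (Hn : 0 < INR N) by (apply lt_0_INR; lia).
  eapply Rle_trans; [|rewrite Rmult_1_l; apply Rle_abs].
  replace ((/ INR N ^ 2 * A) ^ 4) with (/ INR N ^ 4 * (/ INR N ^ 4 * A ^ 4)) by (field; lra).
  apply Rmult_le_compat_l.
  { apply Rlt_le, Rinv_0_lt_compat, pow_lt; lra. }
  replace Q with (/ INR N ^ 4 * (INR N ^ 4 * Q)) by (field; lra).
  apply Rmult_le_compat_l; [apply Rlt_le, Rinv_0_lt_compat, pow_lt; lra|exact M].
Qed.
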